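(* Let $B$ be a commutative ring with identity and $A$ a dense subring of $B$. If $A$ is completely normal, then $B$ is completely normal and hence $B$ is a pm-ring.
   Context: All rings are commutative with identity; subrings contain the identity. A ring $R$ is completely normal if $\operatorname{spec} R$ (prime ideals with the Zariski topology) is a completely normal topological space. A pm-ring is a ring in which every prime ideal is contained in a unique maximal ideal. A subring $A$ of $B$ is dense in $B$ if for every ideal $I$ of $B$ and every $b\in B\setminus \operatorname{rad}(I)$ there exists $a\in B\setminus\operatorname{rad}(I)$ with $ab\in A$. *)

(* Defs.v *)
From HB Require Import structures.
From mathcomp Require Import all_boot all_algebra.
Set Implicit Arguments. Unset Strict Implicit. Unset Printing Implicit Defensive.
Import GRing.Theory.
Local Open Scope ring_scope.

Section RingDefs.
Variable R : comPzRingType.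

Definition is_ideal (I : R -> Prop) : Prop :=
  [/\ I 0, (forall x y, I x -> I y -> I (x + y)) & (forall r x, I x -> I (r * x))].

Definition is_prime_ideal (P : R -> Prop) : Prop :=
  [/\ is_ideal P, ~ P 1 & (forall a b, P (a * b) -> P a \/ P b)].

Definition is_maximal_ideal (M : R -> Prop) : Prop :=
  [/\ is_ideal M, ~ M 1 &
      (forall J : R -> Prop, is_ideal J -> (forall x, M x -> J x) ->
         J 1 \/ (forall x, J x <-> M x))].

Definition rad (I : R -> Prop) : R -> Prop := fun x => exists n : nat, I (x ^+ n).

(* points of spec R are prime ideals; a subset of spec R is a predicate on
   predicates (only its prime members matter) *)
Definition spec_set := (R -> Prop) -> Prop.

Definition zariski_closed (C : spec_set) : Prop :=
  exists E : R -> Prop, forall P, is_prime_ideal P ->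
    (C P <-> (forall x, E x -> P x)).

Definition zariski_open (U : spec_set) : Prop :=
  exists C : spec_set, zariski_closed C /\
    forall P, is_prime_ideal P -> (U P <-> ~ C P).

(* the subspace S of spec R is normal: disjoint closed subsets of S
   (traces S ∩ C of closed sets) have disjoint open neighbourhoods in S *)
Definition normal_subspace (S : spec_set) : Prop :=
  forall C1 C2 : spec_set, zariski_closed C1 -> zariski_closed C2 ->
    (forall P, is_prime_ideal P -> S P -> C1 P -> C2 P -> False) ->
    exists U1 U2 : spec_set, [/\ zariski_open U1, zariski_open U2,
      (forall P, is_prime_ideal P -> S P -> C1 P -> U1 P),
      (forall P, is_prime_ideal P -> S P -> C2 P -> U2 P) &
      (forall P, is_prime_ideal P -> S P -> U1 P -> U2 P -> False)].

Definition completely_normal : Prop :=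
  forall S : spec_set, normal_subspace S.

Definition pm_ring : Prop :=
  forall P, is_prime_ideal P ->
    (exists M, is_maximal_ideal M /\ forall x, P x -> M x) /\
    (forall M1 M2, is_maximal_ideal M1 -> is_maximal_ideal M2 ->
       (forall x, P x -> M1 x) -> (forall x, P x -> M2 x) ->
       forall x, M1 x <-> M2 x).

End RingDefs.

(* A is (identified via the injective unital ring morphism f with) a dense
   subring of B *)
Definition dense_subring (A B : comPzRingType) (f : {rmorphism A -> B}) : Prop :=
  forall I : B -> Prop, is_ideal I ->
    forall b : B, ~ rad I b ->
      exists a : B, ~ rad I a /\ exists a' : A, f a' = a * b.

(* Main.v *)
Require Import Defs.
From HB Require Import structures.
From mathcomp Require Import all_boot all_algebra.
From mathcomp Require Import boolp classical_sets.
From Stdlib Require Import Classical.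
Import GRing.Theory.
Local Open Scope ring_scope.
Local Open Scope classical_set_scope.

Section Aux.
Variable R : comPzRingType.

Lemma prime_rad {Q : R -> Prop} {b} : is_prime_ideal Q -> Defs.rad Q b -> Q b.
Proof.
move=> [_ Q1 QP] [n]; elim: n => [|n IH]; first by rewrite expr0.
rewrite exprS => /QP [] //; exact: IH.
Qed.

Definition Jof (E : R -> Prop) : R -> Prop :=
  fun x => forall Q', is_prime_ideal Q' -> (forall y, E y -> Q' y) -> Q' x.

Lemma max_prime {M : R -> Prop} : is_maximal_ideal M -> is_prime_ideal M.
Proof.
move=> [[M0 MD MM] M1 Mmax]; split; [by split| by [] |].
move=> a b Mab; case: (classic (M a)) => [|Ma]; [by left|right].
pose J := fun x => exists m r, M m /\ x = m + r * a.
have hJ : is_ideal J.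
  split.
  - by exists 0, 0; rewrite mul0r addr0.
  - move=> x y [m [r [Mm ->]]] [m' [r' [Mm' ->]]].
    exists (m + m'), (r + r'); split; first exact: MD.
    by rewrite mulrDl !addrA (addrAC m (r * a)).
  - move=> s x [m [r [Mm ->]]]; exists (s * m), (s * r); split; first exact: MM.
    by rewrite mulrDr mulrA.
have sub : forall x, M x -> J x by move=> x Mx; exists x, 0; split => //; rewrite mul0r addr0.
have [J1|JM] := Mmax J hJ sub.
- case: J1 => m [r [Mm h1]].
  have -> : b = b * m + r * (a * b) by rewrite mulrA (mulrC b) -mulrDl -h1 mul1r.
  by apply: MD; apply: MM.
- exfalso; apply: Ma; apply/JM; exists 0, 1; split => //; by rewrite add0r mul1r.
Qed.

Lemma incl_eq {M1 M2 : R -> Prop} : is_maximal_ideal M1 -> is_maximal_ideal M2 ->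
  (forall x, M1 x -> M2 x) -> forall x, M1 x <-> M2 x.
Proof.
move=> [_ _ h] [I2 n2 _] s; case: (h M2 I2 s) => // e x; by split => /e.
Qed.

Lemma exists_max (P : R -> Prop) : is_prime_ideal P ->
  exists M, is_maximal_ideal M /\ forall x, P x -> M x.
Proof.
move=> [[P0 PD PM] P1 _].
pose good (X : set R) := [/\ is_ideal X, ~ X 1 & forall x, P x -> X x].
pose Pp (X : set R) := X = set0 \/ good X.
have [Mx [PMx hmax]] : exists A, Pp A /\ forall B, A `<` B -> ~ Pp B.
  apply: Zorn_bigcup => F FP Ftot.
  case: (classic (exists X, F X /\ good X)) => [[X0 [FX0 gX0]]|hno]; last first.
    left; apply/seteqP; split => x //=.
    move=> [X FX Xx]; case: (FP X FX) => [hX|gX]; first by rewrite hX in Xx.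
    by exfalso; apply: hno; exists X.
  right.
  have gY : forall Y, F Y -> forall y, Y y -> good Y.
    by move=> Y FY y Yy; case: (FP Y FY) => // hY; rewrite hY in Yy.
  split.
  - split.
    + by exists X0 => //; case: gX0 => [[]].
    + move=> x y [X FX Xx] [Y FY Yy]; case: (Ftot X Y FX FY) => hs.
      * exists Y => //; case: (gY Y FY y Yy) => [[_ hD _] _ _]; apply: hD => //; exact: hs.
      * exists X => //; case: (gY X FX x Xx) => [[_ hD _] _ _]; apply: hD => //; exact: hs.
    + move=> r x [X FX Xx]; exists X => //; case: (gY X FX x Xx) => [[_ _ hM] _ _]; exact: hM.
  - by move=> [X FX X1]; case: (gY X FX 1 X1) => _ h _; exact: h X1.
  - by move=> x Px; exists X0 => //; case: gX0 => _ _ h; exact: h.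
have gM : good Mx.
  case: PMx => // hM0; exfalso; apply: (hmax P).
  + split; first by rewrite hM0 => x.
    by move=> h; have := h 0 P0; rewrite hM0.
  + by right; split => //; split.
exists Mx; split; last by case: gM.
case: gM => hI h1 hP; split => // J hJ hsub.
case: (classic (J 1)) => [|nJ1]; [by left|right].
case: (classic (forall x, J x <-> Mx x)) => // hne; exfalso.
apply: (hmax J).
- split => // hJM; apply: hne => x; split; [exact: hJM|exact: hsub].
- by right; split => // x Px; apply: hsub; apply: hP.
Qed.

Lemma cn_pm : completely_normal R -> pm_ring R.
Proof.
move=> hcn P hP; split; first exact: exists_max.
move=> M1 M2 hM1 hM2 PM1 PM2.
case: (classic (forall x, M1 x <-> M2 x)) => // hne; exfalso.
pose S : spec_set R := fun X => X = P \/ X = M1 \/ X = M2.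
pose C1 : spec_set R := fun X => forall x, M1 x -> X x.
pose C2 : spec_set R := fun X => forall x, M2 x -> X x.
have cl1 : zariski_closed C1 by exists M1.
have cl2 : zariski_closed C2 by exists M2.
have disj : forall X, is_prime_ideal X -> S X -> C1 X -> C2 X -> False.
  move=> X _ [->|[->|->]] c1 c2.
  - by apply: hne; apply: incl_eq => // x /c1 /PM2.
  - by apply: hne => x; rewrite (incl_eq hM2 hM1 c2).
  - by apply: hne; apply: incl_eq.
have [U1 [U2 [[Co1 [[E1 hE1] hU1]] [Co2 [[E2 hE2] hU2]] h1 h2 h3]]] := hcn S C1 C2 cl1 cl2 disj.
have pM1 := max_prime hM1; have pM2 := max_prime hM2.
have u1 : U1 M1 by apply: (h1 M1 pM1); [right; left | move=> x].
have u2 : U2 M2 by apply: (h2 M2 pM2); [right; right | move=> x].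
apply: (h3 P hP) ; [by left| |].
- apply/(hU1 P hP) => c; move/(hU1 M1 pM1): u1; apply.
  apply/(hE1 M1 pM1) => x /((proj1 (hE1 P hP)) c); exact: PM1.
- apply/(hU2 P hP) => c; move/(hU2 M2 pM2): u2; apply.
  apply/(hE2 M2 pM2) => x /((proj1 (hE2 P hP)) c); exact: PM2.
Qed.

End Aux.
Arguments Jof {R}.
Arguments prime_rad {R Q b}.
Arguments max_prime {R M}.
Arguments incl_eq {R M1 M2}.

Section Transfer.
Variables (A B : comPzRingType) (f : {rmorphism A -> B}).

Lemma prime_preim {Q : B -> Prop} : is_prime_ideal Q ->
  is_prime_ideal (fun a => Q (f a)).
Proof.
move=> [[Q0 QD QM] Q1 QP]; split.
- split; first by rewrite rmorph0.
  + by move=> x y hx hy; rewrite rmorphD; exact: QD.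
  + by move=> r x hx; rewrite rmorphM; exact: QM.
- by rewrite rmorph1.
- by move=> a b; rewrite rmorphM; exact: QP.
Qed.

Lemma key (hd : dense_subring f) (E Q : B -> Prop) : is_prime_ideal Q ->
  (forall a, Jof E (f a) -> Q (f a)) -> forall b, E b -> Q b.
Proof.
move=> hQ hJ b Eb; case: (classic (Q b)) => // nQb; exfalso.
have nrb : ~ Defs.rad Q b by move=> /(prime_rad hQ).
have [a [nra [a' ha']]] := hd Q (let: And3 i _ _ := hQ in i) b nrb.
have : Q (f a') .
  apply: hJ => Q' hQ' EQ'; rewrite ha'.
  case: hQ' => [[_ _ hM] _ _]; exact: hM (EQ' _ Eb).
rewrite ha'; case: hQ => _ _ hP /hP [Qa|//]; apply: nra; by exists 1%N; rewrite expr1.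
Qed.

Lemma cn_transfer : dense_subring f -> completely_normal A -> completely_normal B.
Proof.
move=> hd hA S C1 C2 [E1 hE1] [E2 hE2] disj.
pose S' : spec_set A := fun P => exists Q, [/\ is_prime_ideal Q, S Q & P = (fun a => Q (f a))].
pose C1' : spec_set A := fun P => forall a, Jof E1 (f a) -> P a.
pose C2' : spec_set A := fun P => forall a, Jof E2 (f a) -> P a.
have cl1 : zariski_closed C1' by exists (fun a => Jof E1 (f a)).
have cl2 : zariski_closed C2' by exists (fun a => Jof E2 (f a)).
have disj' : forall P, is_prime_ideal P -> S' P -> C1' P -> C2' P -> False.
  move=> P _ [Q [hQ SQ ->]] c1 c2; apply: (disj Q hQ SQ).
  - by apply/(hE1 Q hQ); exact: key.
  - by apply/(hE2 Q hQ); exact: key.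
have [U1 [U2 [[Co1 [[F1 hF1] hU1]] [Co2 [[F2 hF2] hU2]] h1 h2 h3]]] := hA S' C1' C2' cl1 cl2 disj'.
exists (fun Q => U1 (fun a => Q (f a))), (fun Q => U2 (fun a => Q (f a))); split.
- exists (fun Q => Co1 (fun a => Q (f a))); split.
  + exists (fun b => exists a, F1 a /\ b = f a) => Q hQ.
    rewrite (hF1 _ (prime_preim hQ)); split.
    * by move=> h x [a [Fa ->]]; exact: h.
    * by move=> h a Fa; apply: h; exists a.
  + by move=> Q hQ; exact: (hU1 _ (prime_preim hQ)).
- exists (fun Q => Co2 (fun a => Q (f a))); split.
  + exists (fun b => exists a, F2 a /\ b = f a) => Q hQ.
    rewrite (hF2 _ (prime_preim hQ)); split.
    * by move=> h x [a [Fa ->]]; exact: h.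
    * by move=> h a Fa; apply: h; exists a.
  + by move=> Q hQ; exact: (hU2 _ (prime_preim hQ)).
- move=> Q hQ SQ c1; apply: h1; first exact: prime_preim.
  + by exists Q.
  + by move=> a ha; apply: ha => //; apply/(hE1 Q hQ).
- move=> Q hQ SQ c2; apply: h2; first exact: prime_preim.
  + by exists Q.
  + by move=> a ha; apply: ha => //; apply/(hE2 Q hQ).
- move=> Q hQ SQ u1 u2; apply: (h3 _ (prime_preim hQ)) => //; by exists Q.
Qed.

End Transfer.

Theorem theorem4p7 (A B : comPzRingType) (f : {rmorphism A -> B}) :
  injective f -> dense_subring f -> completely_normal A ->
  completely_normal B /\ pm_ring B.
Proof.
move=> _ hd hA; have hB := @cn_transfer A B f hd hA; split => //; exact: cn_pm.
Qed.
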